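(* Let $B\subset\mathbb R^2$ be a closed Euclidean ball of positive radius, and let $T\subset\mathbb R^2$ be a closed non-degenerate (filled) triangle. Then $S(B)=S(T)=\{(0,0)\}$. Consequently, neither $B$ nor $T$ is the achievement set $E(v_n)$ of any sequence $(v_n)$ in $\mathbb R^2$ with $\sum_n v_n$ absolutely convergent.
   Context: For an absolutely convergent series $\sum_n v_n$ in $\mathbb R^2$, its achievement set is $E(v_n)=\{\sum_{n=1}^\infty \varepsilon_n v_n : (\varepsilon_n)\in\{0,1\}^{\mathbb N}\}$. For $A\subset\mathbb R^2$, the spectre of $A$ is $S(A)=\{x\in \mathbb R^2:\ \forall y\in A,\ y+x\in A\text{ or }y-x\in A\}$. *)

(* Defs.v *)
From Stdlib Require Import Reals.
Open Scope R_scope.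

Definition pt := (R * R)%type.

Definition padd (x y : pt) : pt := (fst x + fst y, snd x + snd y).
Definition psub (x y : pt) : pt := (fst x - fst y, snd x - snd y).
Definition pscal (a : R) (x : pt) : pt := (a * fst x, a * snd x).
Definition pzero : pt := (0, 0).

Definition enorm (x : pt) : R := sqrt (fst x ^ 2 + snd x ^ 2).

Definition closed_ball (c : pt) (r : R) : pt -> Prop :=
  fun x => enorm (psub x c) <= r.

Definition nondegenerate (a b c : pt) : Prop :=
  (fst b - fst a) * (snd c - snd a) - (snd b - snd a) * (fst c - fst a) <> 0.

Definition filled_triangle (a b c : pt) : pt -> Prop :=
  fun x => exists al be ga : R,
    0 <= al /\ 0 <= be /\ 0 <= ga /\ al + be + ga = 1 /\
    x = padd (padd (pscal al a) (pscal be b)) (pscal ga c).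

Definition spectre (A : pt -> Prop) : pt -> Prop :=
  fun x => forall y, A y -> A (padd y x) \/ A (psub y x).

Definition abs_convergent (v : nat -> pt) : Prop :=
  exists l : R, Un_cv (fun N => sum_f_R0 (fun n => enorm (v n)) N) l.

Definition subsum_to (v : nat -> pt) (eps : nat -> bool) (p : pt) : Prop :=
  Un_cv (fun N => sum_f_R0 (fun n => if eps n then fst (v n) else 0) N) (fst p) /\
  Un_cv (fun N => sum_f_R0 (fun n => if eps n then snd (v n) else 0) N) (snd p).

Definition achievement_set (v : nat -> pt) : pt -> Prop :=
  fun p => exists eps : nat -> bool, subsum_to v eps p.

Definition set_eq (A B : pt -> Prop) : Prop := forall x, A x <-> B x.

(* Main.v *)
Require Import Defs.
From Stdlib Require Import Reals Lra Lia Arith Classical.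
Open Scope R_scope.

Lemma padd0 y : padd y pzero = y.
Proof. destruct y; unfold padd, pzero; simpl; f_equal; ring. Qed.

Lemma spectre0 (A : pt -> Prop) : spectre A pzero.
Proof. intros y Hy; left; rewrite padd0; exact Hy. Qed.

Lemma ball_out p r : 0 < r -> fst p ^ 2 + snd p ^ 2 > r ^ 2 -> ~ enorm p <= r.
Proof.
  intros Hr H Hle. unfold enorm in Hle.
  assert (H0 : 0 <= fst p ^ 2 + snd p ^ 2) by nra.
  pose proof (sqrt_sqrt _ H0). pose proof (sqrt_pos (fst p ^ 2 + snd p ^ 2)). nra.
Qed.

Lemma nonzero_cases (x : pt) : x <> pzero -> fst x ^ 2 + snd x ^ 2 > 0.
Proof.
  intros H. destruct (Req_dec (fst x) 0); destruct (Req_dec (snd x) 0).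
  - exfalso; apply H; destruct x; unfold pzero; simpl in *; subst; reflexivity.
  - nra. - nra. - nra.
Qed.

Lemma ball_spectre (c : pt) (r : R) : 0 < r ->
  set_eq (spectre (closed_ball c r)) (fun x => x = pzero).
Proof.
  intros Hr x; split.
  - intros Hs. destruct (Classical_Prop.classic (x = pzero)) as [E|E]; [exact E|exfalso].
    pose proof (nonzero_cases x E) as Hsp.
    set (s := fst x ^ 2 + snd x ^ 2) in *.
    set (q := sqrt s).
    assert (Hq : 0 < q) by (apply sqrt_lt_R0; lra).
    assert (Hqq : q * q = s) by (apply sqrt_sqrt; lra).
    set (t := r / q).
    assert (Ht : t * t * s = r * r) by (unfold t; rewrite <- Hqq; field; lra).
    set (y := (fst c + t * (- snd x), snd c + t * fst x)).
    assert (Hy : closed_ball c r y).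
    { unfold closed_ball, enorm, y, psub; cbn [fst snd].
      replace ((fst c + t * - snd x - fst c) ^ 2 + (snd c + t * fst x - snd c) ^ 2)
        with (r ^ 2) by (unfold s in Ht; nra).
      rewrite sqrt_pow2; lra. }
    destruct (Hs y Hy) as [H|H]; revert H; apply ball_out; auto;
      unfold y, padd, psub; simpl; unfold s in *; nra.
  - intros ->. apply spectre0.
Qed.

Definition det (p q : pt) := fst p * snd q - snd p * fst q.
Definition Dt (a b c : pt) := det (psub b a) (psub c a).
Definition Lb a b c z := det (psub z a) (psub c a) * Dt a b c.
Definition Lc a b c z := det (psub b a) (psub z a) * Dt a b c.
Definition La a b c z :=
  (Dt a b c - det (psub z a) (psub c a) - det (psub b a) (psub z a)) * Dt a b c.
Definition lb a b c x := det x (psub c a) * Dt a b c.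
Definition lc a b c x := det (psub b a) x * Dt a b c.
Definition la a b c x := - (lb a b c x + lc a b c x).

Ltac crunch := intros;
  repeat match goal with p : pt |- _ => destruct p end;
  unfold La, Lb, Lc, la, lb, lc, Dt, det, padd, psub, pscal in *; cbn [fst snd] in *; ring.

Lemma tri_nonneg a b c z : filled_triangle a b c z ->
  0 <= La a b c z /\ 0 <= Lb a b c z /\ 0 <= Lc a b c z.
Proof.
  intros [al [be [ga [h1 [h2 [h3 [h4 ->]]]]]]].
  replace al with (1 - be - ga) by lra.
  assert (E1 : La a b c (padd (padd (pscal (1 - be - ga) a) (pscal be b)) (pscal ga c))
     = (1 - be - ga) * Dt a b c ^ 2) by crunch.
  assert (E2 : Lb a b c (padd (padd (pscal (1 - be - ga) a) (pscal be b)) (pscal ga c))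
     = be * Dt a b c ^ 2) by crunch.
  assert (E3 : Lc a b c (padd (padd (pscal (1 - be - ga) a) (pscal be b)) (pscal ga c))
     = ga * Dt a b c ^ 2) by crunch.
  rewrite E1, E2, E3. pose proof (pow2_ge_0 (Dt a b c)).
  repeat split; apply Rmult_le_pos; lra.
Qed.

Lemma La_add a b c y x : La a b c (padd y x) = La a b c y + la a b c x. Proof. crunch. Qed.
Lemma Lb_add a b c y x : Lb a b c (padd y x) = Lb a b c y + lb a b c x. Proof. crunch. Qed.
Lemma Lc_add a b c y x : Lc a b c (padd y x) = Lc a b c y + lc a b c x. Proof. crunch. Qed.
Lemma La_sub a b c y x : La a b c (psub y x) = La a b c y - la a b c x. Proof. crunch. Qed.
Lemma Lb_sub a b c y x : Lb a b c (psub y x) = Lb a b c y - lb a b c x. Proof. crunch. Qed.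
Lemma Lc_sub a b c y x : Lc a b c (psub y x) = Lc a b c y - lc a b c x. Proof. crunch. Qed.
Lemma La_a a b c : La a b c a = Dt a b c ^ 2. Proof. crunch. Qed.
Lemma Lb_a a b c : Lb a b c a = 0. Proof. crunch. Qed.
Lemma Lc_a a b c : Lc a b c a = 0. Proof. crunch. Qed.
Lemma La_b a b c : La a b c b = 0. Proof. crunch. Qed.
Lemma Lc_b a b c : Lc a b c b = 0. Proof. crunch. Qed.
Lemma La_c a b c : La a b c c = 0. Proof. crunch. Qed.
Lemma Lb_c a b c : Lb a b c c = 0. Proof. crunch. Qed.

Lemma vert_a a b c : filled_triangle a b c a.
Proof. exists 1, 0, 0. repeat split; try lra.
  destruct a, b, c; unfold padd, pscal; cbn [fst snd]; f_equal; ring. Qed.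
Lemma vert_b a b c : filled_triangle a b c b.
Proof. exists 0, 1, 0. repeat split; try lra.
  destruct a, b, c; unfold padd, pscal; cbn [fst snd]; f_equal; ring. Qed.
Lemma vert_c a b c : filled_triangle a b c c.
Proof. exists 0, 0, 1. repeat split; try lra.
  destruct a, b, c; unfold padd, pscal; cbn [fst snd]; f_equal; ring. Qed.

Lemma l_zero a b c x : nondegenerate a b c ->
  lb a b c x = 0 -> lc a b c x = 0 -> x = pzero.
Proof.
  intros Hn H1 H2. unfold nondegenerate in Hn.
  fold (Dt a b c) in Hn. unfold Dt, det, psub in Hn; cbn [fst snd] in Hn.
  unfold lb, lc in *.
  apply Rmult_integral in H1; apply Rmult_integral in H2.
  unfold Dt, det, psub in H1, H2; cbn [fst snd] in H1, H2.
  destruct H1 as [H1|H1]; [|contradiction].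
  destruct H2 as [H2|H2]; [|contradiction].
  set (D := (fst b - fst a) * (snd c - snd a) - (snd b - snd a) * (fst c - fst a)) in *.
  assert (X1 : D * fst x = 0).
  { replace (D * fst x) with ((fst b - fst a) * (fst x * (snd c - snd a) - snd x * (fst c - fst a))
      + (fst c - fst a) * ((fst b - fst a) * snd x - (snd b - snd a) * fst x)) by (unfold D; ring).
    rewrite H1, H2; ring. }
  assert (X2 : D * snd x = 0).
  { replace (D * snd x) with ((snd b - snd a) * (fst x * (snd c - snd a) - snd x * (fst c - fst a))
      + (snd c - snd a) * ((fst b - fst a) * snd x - (snd b - snd a) * fst x)) by (unfold D; ring).
    rewrite H1, H2; ring. }
  apply Rmult_integral in X1; apply Rmult_integral in X2.
  destruct X1 as [X1|X1]; [contradiction|]. destruct X2 as [X2|X2]; [contradiction|].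
  destruct x; unfold pzero; cbn [fst snd] in *; subst; reflexivity.
Qed.

Ltac rw H := rewrite ?La_add, ?Lb_add, ?Lc_add, ?La_sub, ?Lb_sub, ?Lc_sub,
      ?La_a, ?Lb_a, ?Lc_a, ?La_b, ?Lc_b, ?La_c, ?Lb_c in H.

Lemma tri_spectre a b c : nondegenerate a b c ->
  set_eq (spectre (filled_triangle a b c)) (fun x => x = pzero).
Proof.
  intros Hn x; split.
  - intros Hs. destruct (classic (x = pzero)) as [E|E]; [exact E|exfalso].
    assert (NZ : ~ (lb a b c x = 0 /\ lc a b c x = 0)).
    { intros [h1 h2]; apply E; exact (l_zero a b c x Hn h1 h2). }
    pose proof (pow2_ge_0 (Dt a b c)).
    assert (Hu : la a b c x = - (lb a b c x + lc a b c x)) by reflexivity.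
    pose proof (Hs a (vert_a a b c)) as Ha.
    pose proof (Hs b (vert_b a b c)) as Hb.
    pose proof (Hs c (vert_c a b c)) as Hc.
    destruct Ha as [Ha|Ha]; apply tri_nonneg in Ha;
    destruct Hb as [Hb|Hb]; apply tri_nonneg in Hb;
    destruct Hc as [Hc|Hc]; apply tri_nonneg in Hc;
    rw Ha; rw Hb; rw Hc;
    apply NZ; split; lra.
  - intros ->. apply spectre0.
Qed.

Definition flip (eps : nat -> bool) (n : nat) : nat -> bool :=
  fun k => if Nat.eqb k n then negb (eps n) else eps k.

Lemma sum_flip_lt (f : nat -> R) (eps : nat -> bool) n N : (N < n)%nat ->
  sum_f_R0 (fun k => if flip eps n k then f k else 0) N =
  sum_f_R0 (fun k => if eps k then f k else 0) N.
Proof.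
  intros H. apply sum_eq. intros i Hi. unfold flip.
  rewrite (proj2 (Nat.eqb_neq i n)) by lia. reflexivity.
Qed.

Lemma sum_flip_ge (f : nat -> R) (eps : nat -> bool) n N : (n <= N)%nat ->
  sum_f_R0 (fun k => if flip eps n k then f k else 0) N =
  sum_f_R0 (fun k => if eps k then f k else 0) N + (if eps n then - f n else f n).
Proof.
  induction N as [|N IH]; intros H.
  - assert (n = 0%nat) by lia. subst. simpl. unfold flip. simpl.
    destruct (eps 0%nat); simpl; ring.
  - destruct (Nat.eq_dec n (S N)) as [->|Hne].
    + cbn [sum_f_R0]. rewrite sum_flip_lt by lia. unfold flip at 1.
      rewrite Nat.eqb_refl. destruct (eps (S N)); simpl; ring.
    + cbn [sum_f_R0]. rewrite IH by lia. unfold flip at 1.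
      rewrite (proj2 (Nat.eqb_neq (S N) n)) by lia. ring.
Qed.

Lemma cv_shift (u w : nat -> R) l d n : Un_cv u l ->
  (forall N, (n <= N)%nat -> w N = u N + d) -> Un_cv w (l + d).
Proof.
  intros H Heq e He. destruct (H e He) as [N0 HN]. exists (max N0 n).
  intros N hN. rewrite Heq by lia. unfold R_dist in *.
  replace (u N + d - (l + d)) with (u N - l) by ring. apply HN. lia.
Qed.

Lemma flip_cv (f : nat -> R) (eps : nat -> bool) n l :
  Un_cv (fun N => sum_f_R0 (fun k => if eps k then f k else 0) N) l ->
  Un_cv (fun N => sum_f_R0 (fun k => if flip eps n k then f k else 0) N)
        (l + (if eps n then - f n else f n)).
Proof.
  intros H. eapply cv_shift; [exact H|]. intros N HN. apply sum_flip_ge; exact HN.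
Qed.

Lemma ach_spectre v n : spectre (achievement_set v) (v n).
Proof.
  intros y [eps [H1 H2]].
  pose proof (flip_cv (fun k => fst (v k)) eps n _ H1) as F1.
  pose proof (flip_cv (fun k => snd (v k)) eps n _ H2) as F2.
  cbv beta in F1, F2.
  destruct (eps n) eqn:E.
  - right. exists (flip eps n). split; unfold psub; cbn [fst snd]; assumption.
  - left. exists (flip eps n). split; unfold padd; cbn [fst snd]; assumption.
Qed.

Lemma zero_sum (g : nat -> R) : (forall k, g k = 0) -> forall N, sum_f_R0 g N = 0.
Proof. intros H N; induction N; simpl; rewrite H; [|rewrite IHN]; ring. Qed.

Lemma cv_zero_limit (g : nat -> R) l : (forall k, g k = 0) ->
  Un_cv (fun N => sum_f_R0 g N) l -> l = 0.
Proof.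
  intros H Hc. apply (UL_sequence _ _ _ Hc).
  intros e He. exists 0%nat. intros N _. rewrite zero_sum by exact H.
  unfold R_dist. rewrite Rminus_0_r, Rabs_R0. exact He.
Qed.

Lemma ach_trivial v p : (forall n, v n = pzero) -> achievement_set v p -> p = pzero.
Proof.
  intros Hv [eps [H1 H2]].
  apply cv_zero_limit in H1; [|intros k; rewrite Hv; destruct (eps k); reflexivity].
  apply cv_zero_limit in H2; [|intros k; rewrite Hv; destruct (eps k); reflexivity].
  destruct p; cbn [fst snd] in *; subst; reflexivity.
Qed.

Lemma ach_not (A : pt -> Prop) v p q :
  (forall x, spectre A x -> x = pzero) -> A p -> A q -> p <> q ->
  ~ set_eq (achievement_set v) A.
Proof.
  intros HS Hp Hq Hpq Heq.
  assert (Hv : forall n, v n = pzero).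
  { intros n. apply HS. intros y Hy. apply Heq in Hy.
    destruct (ach_spectre v n y Hy) as [H|H]; [left|right]; apply Heq; exact H. }
  apply Hpq. apply Heq in Hp. apply Heq in Hq.
  rewrite (ach_trivial v p Hv Hp), (ach_trivial v q Hv Hq). reflexivity.
Qed.

Theorem mainTheorem18 :
  (forall (c : pt) (r : R), 0 < r ->
     set_eq (spectre (closed_ball c r)) (fun x => x = pzero)) /\
  (forall a b c : pt, nondegenerate a b c ->
     set_eq (spectre (filled_triangle a b c)) (fun x => x = pzero)) /\
  (forall (c : pt) (r : R), 0 < r ->
     forall v : nat -> pt, abs_convergent v ->
       ~ set_eq (achievement_set v) (closed_ball c r)) /\
  (forall a b c : pt, nondegenerate a b c ->
     forall v : nat -> pt, abs_convergent v ->
       ~ set_eq (achievement_set v) (filled_triangle a b c)).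
Proof.
  split; [exact ball_spectre|]. split; [exact tri_spectre|]. split.
  - intros c r Hr v _.
    apply (ach_not _ v c (fst c + r, snd c)).
    + intros x Hx. apply (ball_spectre c r Hr x). exact Hx.
    + unfold closed_ball, enorm, psub. cbn [fst snd].
      replace ((fst c - fst c) ^ 2 + (snd c - snd c) ^ 2) with 0 by ring.
      rewrite sqrt_0; lra.
    + unfold closed_ball, enorm, psub. cbn [fst snd].
      replace ((fst c + r - fst c) ^ 2 + (snd c - snd c) ^ 2) with (r ^ 2) by ring.
      rewrite sqrt_pow2; lra.
    + intros E. destruct c. injection E. lra.
  - intros a b c Hn v _.
    apply (ach_not _ v a b).
    + intros x Hx. apply (tri_spectre a b c Hn x). exact Hx.
    + apply vert_a.
    + apply vert_b.
    + intros E. subst. apply Hn. ring.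
Qed.
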